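(* Let $a,b$ be parameters with $a+b\notin\{0,-1,-2,\dots\}$, let $\Phi_{a,b}(z)={}_1F_1\left(\begin{array}{c}a\\ a+b\end{array};z\right)$ and let $(z_{a,b;k})_{k\ge1}$ be its zeros. Then for every integer $n\ge0$, \[ \zeta_{a,b}(\{2\}^n)=\frac{(-1)^n}{n!}\frac{(a)_n(b)_n}{(a+b)_n(a+b)_{2n}}. \] In particular $\zeta_{a,b}(\{2\})=-\frac{ab}{(a+b)^2(a+b+1)}$ and $\zeta_{a,b}(\{2,2\})=\frac{a(1+a)b(1+b)}{2(a+b)^2(1+a+b)^2(2+a+b)(3+a+b)}$.
   Context: $(x)_n=x(x+1)\cdots(x+n-1)$, $(x)_0=1$. ${}_1F_1\left(\begin{array}{c}a\\ c\end{array};z\right)=\sum_{p\ge0}\frac{(a)_p}{(c)_p}\frac{z^p}{p!}$. The zeros $z_{a,b;k}$ of $\Phi_{a,b}$ (counted with multiplicity, nonzero) satisfy the Weierstrass factorization $\Phi_{a,b}(z)=e^{\frac{a}{a+b}z}\prod_{k\ge1}\left(1-\frac{z}{z_{a,b;k}}\right)e^{z/z_{a,b;k}}$, with $\sum_k|z_{a,b;k}|^{-2}<\infty$. The multiple zeta value is $\zeta_{a,b}(\{2\}^n)=\sum_{k_1>k_2>\cdots>k_n\ge1}\prod_{i=1}^n z_{a,b;k_i}^{-2}$, with $\zeta_{a,b}(\{2\}^0)=1$; $\{2\}^n$ denotes the argument $2$ repeated $n$ times. *)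

(* Defs.v *)
From Stdlib Require Import Reals Factorial.
From Coquelicot Require Import Coquelicot.
Open Scope C_scope.

Fixpoint poch (x : C) (n : nat) : C :=
  match n with
  | O => 1
  | S m => poch x m * (x + RtoC (INR m))
  end.

Definition Cexp (z : C) : C :=
  (exp (fst z) * cos (snd z), exp (fst z) * sin (snd z))%R.

Definition Ccv (u : nat -> C) (l : C) : Prop :=
  forall eps : R, (0 < eps)%R ->
    exists N : nat, forall n : nat, (N <= n)%nat -> (Cmod (u n - l) < eps)%R.

Fixpoint Csum (N : nat) (f : nat -> C) : C :=
  match N with O => 0 | S M => Csum M f + f M end.
Fixpoint Cprod (N : nat) (f : nat -> C) : C :=
  match N with O => 1 | S M => Cprod M f * f M end.

Definition hyp1F1_partial (a c z : C) (N : nat) : C :=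
  Csum N (fun p => poch a p / poch c p * (z ^ p) / RtoC (INR (fact p))).

Definition is_hyp1F1 (a c z v : C) : Prop := Ccv (hyp1F1_partial a c z) v.

(* Elementary symmetric sum over strictly decreasing index tuples below N:
   esym x n N = sum_{N > k_1 > k_2 > ... > k_n >= 0} prod_i x k_i. *)
Fixpoint esym (x : nat -> C) (n N : nat) : C :=
  match n, N with
  | O, _ => 1
  | S _, O => 0
  | S m, S M => esym x n M + x M * esym x m M
  end.

(* The multiple zeta value zeta_{a,b}({2}^n), written in terms of the sequence
   w k = 1 / z_{a,b;k+1} of reciprocal zeros (w k = 0 is a padding entry, used when
   there are only finitely many zeros); it is the sum of the absolutely convergent
   series sum_{k_1 > ... > k_n} prod_i w_{k_i}^2, i.e. the limit of its truncations. *)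
Definition is_zeta2 (w : nat -> C) (n : nat) (v : C) : Prop :=
  Ccv (fun N => esym (fun k => w k ^ 2) n N) v.

(* The Weierstrass factorization of Phi_{a,b} = 1F1(a; a+b; .) with reciprocal
   zeros w, together with sum_k |z_k|^{-2} < infinity. *)
Definition weierstrass_zeros (a b : C) (w : nat -> C) : Prop :=
  (exists S : R, Ccv (fun N => Csum N (fun k => RtoC (Cmod (w k) ^ 2))) (RtoC S))
  /\
  (forall z : C, exists v : C,
     is_hyp1F1 a (a + b) z v /\
     Ccv (fun N => Cexp (a / (a + b) * z) *
                   Cprod N (fun k => (1 - z * w k) * Cexp (z * w k))) v).

(* Main.v *)
Require Import Defs.
From Stdlib Require Import Reals Factorial Lra Lia Psatz Arith Wf_nat.
From Coquelicot Require Import Coquelicot.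
Open Scope C_scope.

Fixpoint Rsum (N : nat) (f : nat -> R) : R :=
  match N with O => 0%R | S M => (Rsum M f + f M)%R end.

Lemma Csum_ext n f g : (forall i, (i < n)%nat -> f i = g i) -> Csum n f = Csum n g.
Proof. induction n; simpl; intros H; auto. rewrite IHn by (intros; apply H; lia). rewrite H by lia; auto. Qed.

Lemma Rsum_ext n f g : (forall i, (i < n)%nat -> f i = g i) -> Rsum n f = Rsum n g.
Proof. induction n; simpl; intros H; auto. rewrite IHn by (intros; apply H; lia). rewrite H by lia; auto. Qed.

Lemma Csum_plus n f g : Csum n (fun i => f i + g i) = Csum n f + Csum n g.
Proof. induction n; simpl. ring. rewrite IHn; ring. Qed.

Lemma Csum_scal n c f : Csum n (fun i => c * f i) = c * Csum n f.
Proof. induction n; simpl. ring. rewrite IHn; ring. Qed.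

Lemma Csum_opp n f : Csum n (fun i => - f i) = - Csum n f.
Proof. induction n; simpl. ring. rewrite IHn; ring. Qed.

Lemma Csum_shift n f : Csum (S n) f = f O + Csum n (fun i => f (S i)).
Proof. induction n. simpl. ring. change (Csum (S (S n)) f) with (Csum (S n) f + f (S n)).
  rewrite IHn. simpl. ring. Qed.

Lemma Csum_split p q f : Csum (p + q) f = Csum p f + Csum q (fun i => f (p + i)%nat).
Proof. induction q. simpl. rewrite Nat.add_0_r. ring.
  rewrite Nat.add_succ_r. simpl. rewrite IHq. ring. Qed.

Lemma Csum_rev n f : Csum n f = Csum n (fun i => f (n - 1 - i)%nat).
Proof. induction n. auto.
  rewrite (Csum_shift n (fun i => f (S n - 1 - i)%nat)). simpl Csum at 1. rewrite IHn.
  replace (S n - 1 - 0)%nat with n by lia. rewrite Cplus_comm. f_equal.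
  apply Csum_ext. intros. f_equal. lia. Qed.

Lemma Csum_tel n t G : (forall j, (j < n)%nat -> t j = G (S j) - G j) -> Csum n t = G n - G O.
Proof. induction n; simpl; intros H. ring. rewrite IHn by (intros; apply H; lia).
  rewrite H by lia. ring. Qed.

Lemma Csum_zero n (f : nat -> C) : (forall i, (i < n)%nat -> f i = 0) -> Csum n f = 0.
Proof. induction n; simpl; intros H; auto. rewrite IHn by (intros; apply H; lia). rewrite H by lia; ring. Qed.

Lemma Cmod_Csum n f : (Cmod (Csum n f) <= Rsum n (fun i => Cmod (f i)))%R.
Proof. induction n; simpl. rewrite Cmod_0; lra.
  eapply Rle_trans. apply Cmod_triangle. lra. Qed.

Lemma Rsum_le n f g : (forall i, (i < n)%nat -> f i <= g i)%R -> (Rsum n f <= Rsum n g)%R.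
Proof. induction n; simpl; intros H. lra. assert (H1 := H n ltac:(lia)).
  assert (Rsum n f <= Rsum n g)%R by (apply IHn; intros; apply H; lia). lra. Qed.

Lemma Rsum_nonneg n f : (forall i, (i < n)%nat -> 0 <= f i)%R -> (0 <= Rsum n f)%R.
Proof. induction n; simpl; intros H. lra. assert (H1 := H n ltac:(lia)).
  assert (0 <= Rsum n f)%R by (apply IHn; intros; apply H; lia). lra. Qed.

Lemma Rsum_term n f i : (forall i, (i < n)%nat -> 0 <= f i)%R -> (i < n)%nat -> (f i <= Rsum n f)%R.
Proof. induction n; simpl; intros H Hi. lia.
  destruct (Nat.eq_dec i n). subst. assert (0 <= Rsum n f)%R by (apply Rsum_nonneg; intros; apply H; lia). lra.
  assert (f i <= Rsum n f)%R by (apply IHn; [intros; apply H; lia | lia]). assert (H1 := H n ltac:(lia)). lra. Qed.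

Lemma Rsum_scal n c f : Rsum n (fun i => c * f i)%R = (c * Rsum n f)%R.
Proof. induction n; simpl. ring. rewrite IHn; ring. Qed.

Lemma Rsum_plus n f g : Rsum n (fun i => f i + g i)%R = (Rsum n f + Rsum n g)%R.
Proof. induction n; simpl. ring. rewrite IHn; ring. Qed.

Lemma Rsum_geom n q : (0 <= q <= 1/2)%R -> (Rsum n (fun i => q ^ i) <= 2)%R.
Proof. intros Hq. assert (H : (Rsum n (fun i => q ^ i) * (1 - q) = 1 - q ^ n)%R).
  { induction n; simpl. ring. rewrite Rmult_plus_distr_r, IHn. ring. }
  assert (0 <= q ^ n)%R by (apply pow_le; lra).
  assert (Rsum n (fun i => q ^ i) * (1 - q) <= 1)%R by lra.
  assert (0 <= Rsum n (fun i => q ^ i))%R by (apply Rsum_nonneg; intros; apply pow_le; lra).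
  nra. Qed.
Lemma Cmod_tri3 x y z : (Cmod (x - z) <= Cmod (x - y) + Cmod (y - z))%R.
Proof. replace (x - z) with ((x - y) + (y - z)) by ring. apply Cmod_triangle. Qed.

Lemma Cmod_sym x y : Cmod (x - y) = Cmod (y - x).
Proof. replace (x - y) with (- (y - x)) by ring. apply Cmod_opp. Qed.

Lemma Rle_by_eps (x B : R) : (forall eps, 0 < eps -> x < B + eps)%R -> (x <= B)%R.
Proof. intros H. destruct (Rle_dec x B); auto. exfalso.
  specialize (H (x - B)%R ltac:(lra)). lra. Qed.

Lemma Ccv_le u l v B N0 : Ccv u l -> (forall n, (N0 <= n)%nat -> Cmod (u n - v) <= B)%R ->
  (Cmod (l - v) <= B)%R.
Proof. intros Hu Hb. apply Rle_by_eps. intros eps He.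
  destruct (Hu eps He) as [N HN]. specialize (HN (N + N0)%nat ltac:(lia)).
  specialize (Hb (N + N0)%nat ltac:(lia)).
  pose proof (Cmod_tri3 l (u (N+N0)%nat) v). rewrite (Cmod_sym l (u _)) in H. lra. Qed.

Lemma Ccv_unique u l1 l2 : Ccv u l1 -> Ccv u l2 -> l1 = l2.
Proof. intros H1 H2.
  assert (Cmod (l1 - l2) <= 0)%R.
  { apply Rle_by_eps. intros eps He. destruct (H1 (eps/2)%R ltac:(lra)) as [N1 HN1].
    destruct (H2 (eps/2)%R ltac:(lra)) as [N2 HN2].
    specialize (HN1 (N1+N2)%nat ltac:(lia)). specialize (HN2 (N1+N2)%nat ltac:(lia)).
    pose proof (Cmod_tri3 l1 (u (N1+N2)%nat) l2). rewrite (Cmod_sym l1 (u _)) in H. lra. }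
  pose proof (Cmod_ge_0 (l1 - l2)). assert (Cmod (l1 - l2) = 0%R) by lra.
  apply Cmod_eq_0 in H3. replace l1 with ((l1 - l2) + l2) by ring. rewrite H3; ring. Qed.

Lemma Ccv_ext u v l : (forall n, u n = v n) -> Ccv u l -> Ccv v l.
Proof. intros E H eps He. destruct (H eps He) as [N HN]. exists N. intros n Hn. rewrite <- E. auto. Qed.

Lemma Ccv_const c : Ccv (fun _ => c) c.
Proof. intros eps He. exists O. intros. replace (c - c) with (RtoC 0) by ring. rewrite Cmod_0. lra. Qed.

Lemma Ccv_plus u v l m : Ccv u l -> Ccv v m -> Ccv (fun n => u n + v n) (l + m).
Proof. intros Hu Hv eps He. destruct (Hu (eps/2)%R ltac:(lra)) as [N1 H1].
  destruct (Hv (eps/2)%R ltac:(lra)) as [N2 H2]. exists (N1+N2)%nat. intros n Hn.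
  replace (u n + v n - (l + m)) with ((u n - l) + (v n - m)) by ring.
  eapply Rle_lt_trans. apply Cmod_triangle. specialize (H1 n ltac:(lia)). specialize (H2 n ltac:(lia)). lra. Qed.

Lemma Ccv_opp u l : Ccv u l -> Ccv (fun n => - u n) (- l).
Proof. intros Hu eps He. destruct (Hu eps He) as [N H]. exists N. intros n Hn.
  replace (- u n - - l) with (- (u n - l)) by ring. rewrite Cmod_opp. auto. Qed.

Lemma Ccv_bounded u l : Ccv u l -> exists B, (0 <= B)%R /\ forall n, (Cmod (u n) <= B)%R.
Proof. intros Hu. destruct (Hu 1%R ltac:(lra)) as [N HN].
  exists (Rsum N (fun k => Cmod (u k)) + Cmod l + 1)%R.
  assert (0 <= Rsum N (fun k => Cmod (u k)))%R by (apply Rsum_nonneg; intros; apply Cmod_ge_0).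
  pose proof (Cmod_ge_0 l). split. lra. intros n.
  destruct (Nat.lt_ge_cases n N).
  - assert (Cmod (u n) <= Rsum N (fun k => Cmod (u k)))%R by
      (apply (Rsum_term N (fun k => Cmod (u k))); auto; intros; apply Cmod_ge_0). lra.
  - specialize (HN n H1). pose proof (Cmod_tri3 (u n) l 0).
    replace (u n - 0) with (u n) in H2 by ring. replace (l - 0) with l in H2 by ring. lra. Qed.

Lemma Ccv_mult u v l m : Ccv u l -> Ccv v m -> Ccv (fun n => u n * v n) (l * m).
Proof. intros Hu Hv. destruct (Ccv_bounded u l Hu) as [B [HB0 HB]].
  intros eps He. set (K := (B + Cmod m + 1)%R). pose proof (Cmod_ge_0 m).
  assert (HK : (0 < K)%R) by (unfold K; lra).
  destruct (Hu (eps/(2*K))%R) as [N1 H1]. apply Rdiv_lt_0_compat; lra.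
  destruct (Hv (eps/(2*K))%R) as [N2 H2]. apply Rdiv_lt_0_compat; lra.
  exists (N1+N2)%nat. intros n Hn.
  replace (u n * v n - l * m) with (u n * (v n - m) + (u n - l) * m) by ring.
  eapply Rle_lt_trans. apply Cmod_triangle. rewrite !Cmod_mult.
  specialize (H1 n ltac:(lia)). specialize (H2 n ltac:(lia)). specialize (HB n).
  pose proof (Cmod_ge_0 (v n - m)). pose proof (Cmod_ge_0 (u n - l)).
  assert (Cmod (u n) * Cmod (v n - m) <= B * (eps / (2*K)))%R by (apply Rmult_le_compat; try lra; apply Cmod_ge_0).
  assert (Cmod (u n - l) * Cmod m <= (eps / (2*K)) * Cmod m)%R by (apply Rmult_le_compat_r; lra).
  assert (B * (eps / (2*K)) + (eps / (2*K)) * Cmod m < eps)%R.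
  { replace (B * (eps / (2*K)) + (eps / (2*K)) * Cmod m)%R with (eps * ((B + Cmod m) / (2 * K)))%R by (field; lra).
    assert ((B + Cmod m) / (2*K) < 1)%R. { apply (Rdiv_lt_1 (B + Cmod m) (2*K)); unfold K; lra. } nra. }
  lra. Qed.

Lemma Ccv_Csum k (u : nat -> nat -> C) (l : nat -> C) :
  (forall i, (i < k)%nat -> Ccv (u i) (l i)) -> Ccv (fun N => Csum k (fun i => u i N)) (Csum k l).
Proof. induction k; simpl; intros H. apply Ccv_const.
  apply Ccv_plus. apply IHk; intros; apply H; lia. apply H; lia. Qed.

Lemma Ccv_0 u l : Ccv (fun n => u n - l) 0 -> Ccv u l.
Proof. intros H eps He. destruct (H eps He) as [N HN]. exists N. intros n Hn.
  specialize (HN n Hn). replace (u n - l - 0) with (u n - l) in HN by ring. auto. Qed.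
Definition P3 (a c M J : C) : C :=
  let p3 := M + 2*a in
  let p2 := -4*M - 3*M^2 - c*M - 8*a - 6*a*M - 2*a*c in
  let p1 := 5*M + 7*M^2 + 2*M^3 - c*M^2 - 2*c^2 - 2*c^2*M + 10*a + 16*a*M + 5*a*M^2 + 6*a*c + a*c*M - 2*a*c^2 in
  let p0 := -2*M - 4*M^2 - 2*M^3 + c*M + 2*c*M^2 + 2*c*M^3 + 2*c^2 + c^2*M + 2*c^2*M^2 - 2*c^3 - 4*a
            - 10*a*M - 5*a*M^2 - 4*a*c + 3*a*c*M + 5*a*c*M^2 + 6*a*c^2 + 7*a*c^2*M + 2*a*c^3 in
  p0 + p1*J + p2*J^2 + p3*J^3.

Definition alph (c M : C) := (M + 2) * (2*c + M) * (c + M) * (c + M + 1).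
Definition bet (a b M : C) := (2*a + M) * (2*b + M).

Lemma step_core (a b J K Aj Ak sg : C) :
  J + 1 <> 0 -> a + b + J <> 0 -> K + 1 <> 0 -> K + 2 <> 0 -> a + b + K <> 0 -> a + b + K + 1 <> 0 ->
  let c := a + b in let M := J + K in
  let Aj1 := Aj * (a + J) / ((J + 1) * (c + J)) in
  let Ak1 := Ak * (a + K) / ((K + 1) * (c + K)) in
  let Ak2 := Ak1 * (a + (K + 1)) / ((K + 1 + 1) * (c + (K + 1))) in
  alph c M * (sg * Aj * Ak2) - bet a b M * (sg * Aj * Ak) =
  (- sg) * Aj1 * Ak * (- (J + 1) * P3 a c M (J + 1)) / ((K + 1) * (c + K))
  - sg * Aj * Ak1 * (- J * P3 a c M J) / ((K + 2) * (c + (K + 1))).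
Proof. intros H1 H2 H3 H4 H5 H6 c M Aj1 Ak1 Ak2. unfold Ak2, Aj1, Ak1, c, M, alph, bet, P3.
  replace (K + 1 + 1) with (K + 2) by ring. replace (a + b + (K + 1)) with (a + b + K + 1) by ring.
  cbv zeta. field. repeat split; auto. Qed.

Definition Ac (a c : C) (p : nat) : C := poch a p / poch c p / RtoC (INR (fact p)).
Definition Fm (a c : C) (m j : nat) : C := (-1) ^ j * Ac a c j * Ac a c (m - j).
Definition um (a c : C) (m : nat) : C := Csum (S m) (Fm a c m).
Definition Gt (a c : C) (m j : nat) : C :=
  (-1) ^ j * Ac a c j * Ac a c (m + 1 - j) * (- RtoC (INR j) * P3 a c (RtoC (INR m)) (RtoC (INR j)))
  / (RtoC (INR (m + 2 - j)) * (c + RtoC (INR (m + 1 - j)))).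

Lemma RtoC_neq x : x <> 0%R -> RtoC x <> 0.
Proof. intros H E. apply H. apply RtoC_inj. auto. Qed.

Lemma INR_S1_neq k : RtoC (INR k) + 1 <> 0.
Proof. rewrite <- RtoC_plus. apply RtoC_neq. pose proof (pos_INR k). lra. Qed.

Lemma INR_S2_neq k : RtoC (INR k) + 2 <> 0.
Proof. rewrite <- RtoC_plus. apply RtoC_neq. pose proof (pos_INR k). lra. Qed.

Lemma fact_C_neq p : RtoC (INR (fact p)) <> 0.
Proof. apply RtoC_neq. apply INR_fact_neq_0. Qed.

Lemma poch_neq c p : (forall k, c + RtoC (INR k) <> 0) -> poch c p <> 0.
Proof. intros Hc. induction p; simpl. apply RtoC_neq; lra. apply Cmult_neq_0; auto. Qed.

Lemma INR_C_S k : RtoC (INR (S k)) = RtoC (INR k) + 1.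
Proof. rewrite S_INR, RtoC_plus. auto. Qed.

Lemma INR_C_plus j k : RtoC (INR (j + k)) = RtoC (INR j) + RtoC (INR k).
Proof. rewrite plus_INR, RtoC_plus. auto. Qed.

Lemma Ac_0 a c : Ac a c 0 = 1.
Proof. unfold Ac. simpl. field.
  all: try (apply RtoC_neq; lra). Qed.

Lemma Ac_S a c p : (forall k, c + RtoC (INR k) <> 0) ->
  Ac a c (S p) = Ac a c p * (a + RtoC (INR p)) / ((RtoC (INR p) + 1) * (c + RtoC (INR p))).
Proof. intros Hc. unfold Ac. simpl poch.
  replace (fact (S p)) with (S p * fact p)%nat by reflexivity.
  rewrite mult_INR, RtoC_mult, INR_C_S.
  pose proof (poch_neq c p Hc). pose proof (fact_C_neq p). pose proof (Hc p). pose proof (INR_S1_neq p).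
  field. repeat split; auto. Qed.

Lemma Gt_0 a c m : Gt a c m 0 = 0.
Proof. unfold Gt. simpl INR. replace (- RtoC 0) with (RtoC 0) by (rewrite <- RtoC_opp; f_equal; ring).
  unfold Cdiv. ring. Qed.

Lemma um_rec a b m : (forall k, a + b + RtoC (INR k) <> 0) ->
  alph (a + b) (RtoC (INR m)) * um a (a + b) (m + 2) = bet a b (RtoC (INR m)) * um a (a + b) m.
Proof. intros Hc. set (c := a + b) in *.
  assert (Hstep : forall j, (j < S m)%nat ->
    alph c (RtoC (INR m)) * Fm a c (m + 2) j - bet a b (RtoC (INR m)) * Fm a c m j =
    Gt a c m (S j) - Gt a c m j).
  { intros j Hj. assert (Hk : exists k, m = (j + k)%nat) by (exists (m - j)%nat; lia).
    destruct Hk as [k ->]. unfold Fm, Gt.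
    replace (j + k + 2 - j)%nat with (S (S k)) by lia.
    replace (j + k - j)%nat with k by lia.
    replace (j + k + 1 - S j)%nat with k by lia.
    replace (j + k + 2 - S j)%nat with (S k) by lia.
    replace (j + k + 1 - j)%nat with (S k) by lia.
    rewrite !(Ac_S a c) by auto. rewrite Cpow_S.
    rewrite !INR_C_S, !INR_C_plus.
    pose proof (poch_neq c j Hc). pose proof (Hc j). pose proof (Hc k). pose proof (Hc (S k)).
    rewrite INR_C_S in H2.
    pose proof (INR_S1_neq j). pose proof (INR_S1_neq k). pose proof (INR_S2_neq k).
    unfold alph, bet, P3, c in *. cbv zeta.
    replace (RtoC (INR k) + 1 + 1) with (RtoC (INR k) + 2) by ring.
    field. repeat split; auto. }
  unfold um. pose proof (Csum_tel (S m) _ _ Hstep) as Htel. rewrite Gt_0 in Htel.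
  replace (S (m + 2)) with (S (S (S m))) by lia.
  change (Csum (S (S (S m))) (Fm a c (m + 2))) with
    (Csum (S m) (Fm a c (m + 2)) + Fm a c (m+2) (S m) + Fm a c (m + 2) (S (S m))).
  assert (E : Csum (S m) (fun j => alph c (RtoC (INR m)) * Fm a c (m + 2) j - bet a b (RtoC (INR m)) * Fm a c m j)
     = alph c (RtoC (INR m)) * Csum (S m) (Fm a c (m + 2)) - bet a b (RtoC (INR m)) * Csum (S m) (Fm a c m)).
  { transitivity (Csum (S m) (fun j => alph c (RtoC (INR m)) * Fm a c (m + 2) j) +
                   Csum (S m) (fun j => (- bet a b (RtoC (INR m))) * Fm a c m j)).
    { rewrite <- Csum_plus. apply Csum_ext; intros; ring. }
    rewrite !Csum_scal. ring. }
  rewrite E in Htel.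
  assert (B : Gt a c m (S m) + alph c (RtoC (INR m)) * (Fm a c (m+2) (S m) + Fm a c (m + 2) (S (S m))) = 0).
  { unfold Gt, Fm.
    replace (m + 2 - S m)%nat with 1%nat by lia. replace (m + 1 - S m)%nat with 0%nat by lia.
    replace (m + 2 - S (S m))%nat with 0%nat by lia.
    rewrite (Ac_S a c (S m)) by auto. rewrite (Ac_S a c 0) by auto. rewrite Ac_0.
    rewrite !Cpow_S. rewrite !INR_C_S. simpl INR.
    pose proof (Hc 0%nat). pose proof (Hc (S m)). rewrite INR_C_S in H0. simpl INR in H.
    pose proof (INR_S2_neq m).
    unfold alph, P3, c in H, H0, H1 |- *. cbv zeta. field. repeat split; auto.
    - replace (RtoC (INR m) + 1 + 1) with (RtoC (INR m) + 2) by ring. auto.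
    - replace (a + b) with (a + b + RtoC (INR 0)) by (simpl; ring). apply Hc. }
  set (al := alph c (RtoC (INR m))) in *. set (be := bet a b (RtoC (INR m))) in *.
  transitivity ((al * Csum (S m) (Fm a c (m + 2)) - be * Csum (S m) (Fm a c m))
     + al * (Fm a c (m+2) (S m) + Fm a c (m + 2) (S (S m))) + be * Csum (S m) (Fm a c m)). ring.
  rewrite Htel. transitivity ((Gt a c m (S m) + al * (Fm a c (m+2) (S m) + Fm a c (m + 2) (S (S m))))
     + be * Csum (S m) (Fm a c m)). ring. rewrite B. ring. Qed.

Definition Bn (a b : C) (n : nat) : C :=
  poch a n * poch b n / (RtoC (INR (fact n)) * poch (a + b) n * poch (a + b) (2 * n)).

Lemma INR_C_2n n : RtoC (INR (2 * n)) = 2 * RtoC (INR n).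
Proof. replace (2 * n)%nat with (n + n)%nat by lia. rewrite INR_C_plus. ring. Qed.

Lemma poch_S x n : poch x (S n) = poch x n * (x + RtoC (INR n)).
Proof. reflexivity. Qed.

Lemma um_even a b n : (forall k, a + b + RtoC (INR k) <> 0) -> um a (a + b) (2 * n) = Bn a b n.
Proof. intros Hc. induction n.
  - unfold um, Bn, Fm. simpl. rewrite Ac_0. simpl. field; try (apply RtoC_neq; lra).
  - replace (2 * S n)%nat with (2 * n + 2)%nat by lia.
    pose proof (um_rec a b (2 * n) Hc) as R.
    assert (Hal : alph (a + b) (RtoC (INR (2 * n))) <> 0).
    { unfold alph. rewrite INR_C_2n. pose proof (Hc n). pose proof (Hc (2 * n)%nat). pose proof (Hc (S (2 * n))).
      rewrite INR_C_2n in H0. rewrite INR_C_S, INR_C_2n in H1.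
      repeat apply Cmult_neq_0; auto.
      - replace (2 * RtoC (INR n) + 2) with (RtoC (2 * (INR n + 1))) by (rewrite RtoC_mult, RtoC_plus; ring).
        apply RtoC_neq. pose proof (pos_INR n). lra.
      - replace (2 * (a + b) + 2 * RtoC (INR n)) with (2 * (a + b + RtoC (INR n))) by ring.
        apply Cmult_neq_0; auto. apply RtoC_neq; lra.
      - replace (a + b + 2 * RtoC (INR n) + 1) with (a + b + (2 * RtoC (INR n) + 1)) by ring. auto. }
    transitivity (alph (a + b) (RtoC (INR (2 * n))) * um a (a + b) (2 * n + 2) / alph (a + b) (RtoC (INR (2 * n)))).
    { field. auto. }
    rewrite R, IHn. clear R. unfold Bn, alph, bet in *.
    replace (2 * S n)%nat with (S (S (2 * n))) by lia. rewrite !poch_S.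
    replace (fact (S n)) with (S n * fact n)%nat by reflexivity.
    rewrite (mult_INR (S n) (fact n)), RtoC_mult. rewrite !INR_C_S. rewrite !INR_C_2n in *.
    pose proof (poch_neq (a + b) n Hc). pose proof (poch_neq (a + b) (2 * n) Hc).
    pose proof (fact_C_neq n). pose proof (INR_S1_neq n).
    pose proof (Hc n). pose proof (Hc (2 * n)%nat). pose proof (Hc (S (2 * n))).
    rewrite INR_C_2n in H4. rewrite INR_C_S, INR_C_2n in H5.
    field. repeat split; auto.
    - replace (2 * (a + b) + 2 * RtoC (INR n)) with (2 * (a + b + RtoC (INR n))) by ring.
      apply Cmult_neq_0; auto. apply RtoC_neq; lra.
    - replace (2 * RtoC (INR n) + 2) with (RtoC (2 * (INR n + 1))) by (rewrite RtoC_mult, RtoC_plus; ring).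
      apply RtoC_neq. pose proof (pos_INR n). lra.
Qed.

Definition gam (a c : C) (m : nat) : C :=
  Csum (S m) (fun i => Ac a c i * (Ac a c (m - i) * (-1) ^ (m - i))).

Lemma gam_um a c m : gam a c m = um a c m.
Proof. unfold gam, um. rewrite Csum_rev. apply Csum_ext. intros i Hi.
  replace (S m - 1 - i)%nat with (m - i)%nat by lia. replace (m - (m - i))%nat with i by lia.
  unfold Fm. ring. Qed.

Lemma neg1_even n : (-1) ^ (2 * n) = 1.
Proof. induction n. reflexivity. replace (2 * S n)%nat with (S (S (2 * n))) by lia.
  rewrite !Cpow_S, IHn. ring. Qed.

Lemma neg1_sq i : (-1) ^ i * (-1) ^ i = 1.
Proof. rewrite <- Cpow_add_r. replace (i + i)%nat with (2 * i)%nat by lia. apply neg1_even. Qed.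

Lemma um_odd a c n : um a c (2 * n + 1) = 0.
Proof. set (m := (2 * n + 1)%nat).
  assert (E : um a c m = - um a c m).
  { unfold um at 1. rewrite Csum_rev. unfold um. rewrite <- Csum_opp. apply Csum_ext. intros i Hi.
    replace (S m - 1 - i)%nat with (m - i)%nat by lia. unfold Fm. replace (m - (m - i))%nat with i by lia.
    assert (S1 : (-1) ^ (m - i) = - (-1) ^ i).
    { assert (Hm1 : (-1) ^ m = -1) by (unfold m; rewrite Cpow_add_r, neg1_even; simpl; ring).
      assert (Hm : (-1) ^ m = (-1) ^ (m - i) * (-1) ^ i) by (rewrite <- Cpow_add_r; f_equal; lia).
      transitivity ((-1) ^ (m - i) * ((-1) ^ i * (-1) ^ i)). rewrite neg1_sq; ring.
      transitivity ((-1) ^ (m - i) * (-1) ^ i * (-1) ^ i). ring. rewrite <- Hm, Hm1. ring. }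
    rewrite S1. ring. }
  replace (um a c m) with ((um a c m - - um a c m) / 2) by (field; apply RtoC_neq; lra).
  rewrite <- E. unfold Cdiv. ring. Qed.

Lemma Csum_ext_zero L L' (f : nat -> C) : (L <= L')%nat -> (forall i, (L <= i)%nat -> f i = 0) -> Csum L f = Csum L' f.
Proof. intros H Hz. replace L' with (L + (L' - L))%nat by lia. rewrite Csum_split.
  rewrite (Csum_zero (L' - L)). ring. intros; apply Hz; lia. Qed.

Lemma Cmod_RtoC_pow (y : R) n : (0 <= y)%R -> Cmod (RtoC y ^ n) = (y ^ n)%R.
Proof. intros Hy. rewrite Cmod_pow, Cmod_R, Rabs_pos_eq; auto. Qed.

Lemma tail_bound (f : nat -> C) (K1 y : R) (n T : nat) :
  (1 <= K1)%R -> (0 < y)%R -> (K1 * y <= 1/2)%R ->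
  (forall j, Cmod (f j) <= K1 ^ j)%R ->
  (Cmod (Csum T (fun i => (f (n + 1 + i)%nat * RtoC y ^ (n + 1 + i))%C)) <= 2 * K1 ^ (n + 1) * y ^ (n + 1))%R.
Proof. intros HK Hy HKy Hf. eapply Rle_trans. apply Cmod_Csum.
  eapply Rle_trans. apply (Rsum_le T _ (fun i => ((K1 * y) ^ (n + 1) * (K1 * y) ^ i)%R)).
  { intros i _. rewrite Cmod_mult, Cmod_RtoC_pow by lra. rewrite <- pow_add, Rpow_mult_distr. apply Rmult_le_compat_r. apply pow_le; lra. apply Hf. }
  rewrite Rsum_scal. rewrite Rpow_mult_distr.
  assert (0 <= K1 * y)%R by nra.
  pose proof (Rsum_geom T (K1 * y) ltac:(lra)).
  assert (0 <= K1 ^ (n + 1) * y ^ (n + 1))%R by (apply Rmult_le_pos; apply pow_le; lra).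
  replace (2 * K1 ^ (n + 1) * y ^ (n + 1))%R with (K1 ^ (n + 1) * y ^ (n + 1) * 2)%R by ring.
  apply Rmult_le_compat_l; auto. Qed.

Lemma coeff_extract (c : nat -> nat -> C) (L : nat -> nat) (beta : nat -> C) (K1 : R) :
  (1 <= K1)%R ->
  (forall N n, Cmod (c N n) <= K1 ^ n)%R ->
  (forall N n, (L N <= n)%nat -> c N n = 0) ->
  (forall D, exists C, (0 <= C)%R /\ forall y, (0 < y <= 1)%R -> exists v,
       Ccv (fun N => Csum (L N) (fun n => c N n * RtoC y ^ n)) v /\
       (Cmod (v - Csum D (fun n => beta n * RtoC y ^ n))%C <= C * y ^ D)%R) ->
  forall n, Ccv (fun N => c N n) (beta n).
Proof. intros HK Hb Hz Hexp n.
  induction n as [n IH] using (well_founded_induction lt_wf).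
  intros eps Heps.
  destruct (Hexp (S n)) as [C [HC0 HC]].
  set (W := (C + 2 * K1 ^ (n + 1))%R).
  assert (HW : (0 < W)%R) by (unfold W; pose proof (pow_le K1 (n+1)); assert (0 < K1 ^ (n+1))%R by (apply pow_lt; lra); lra).
  set (y := Rmin (1 / (2 * K1)) (eps / (2 * W))).
  assert (Hy0 : (0 < y)%R) by (unfold y; apply Rmin_glb_lt; apply Rdiv_lt_0_compat; lra).
  assert (HKy : (K1 * y <= 1/2)%R).
  { assert (y <= 1 / (2 * K1))%R by apply Rmin_l. apply (Rmult_le_compat_l K1) in H; try lra.
    replace (K1 * (1 / (2 * K1)))%R with (1/2)%R in H by (field; lra). lra. }
  assert (Hy1 : (y <= 1)%R) by nra.
  assert (HWy : (W * y <= eps / 2)%R).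
  { assert (y <= eps / (2 * W))%R by apply Rmin_r. apply (Rmult_le_compat_l W) in H; try lra.
    replace (W * (eps / (2 * W)))%R with (eps / 2)%R in H by (field; lra). lra. }
  assert (Hyn : (0 < y ^ n)%R) by (apply pow_lt; lra).
  assert (Hlow : Ccv (fun N => Csum n (fun j => (c N j - beta j) * RtoC y ^ j)) 0).
  { replace (RtoC 0) with (Csum n (fun _ => RtoC 0)) by (apply Csum_zero; auto).
    apply Ccv_Csum. intros j Hj. replace (RtoC 0) with ((beta j + - beta j) * RtoC y ^ j) by ring.
    apply (Ccv_mult (fun N => c N j - beta j) (fun _ => RtoC y ^ j)).
    apply Ccv_plus. apply IH; auto. apply Ccv_const. apply Ccv_const. }
  destruct (HC y ltac:(lra)) as [g [Hg HCg]].
  destruct (Hg (eps / 4 * y ^ n)%R) as [N1 HN1]. apply Rmult_lt_0_compat; lra.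
  destruct (Hlow (eps / 4 * y ^ n)%R) as [N2 HN2]. apply Rmult_lt_0_compat; lra.
  exists (N1 + N2)%nat. intros N HN.
  specialize (HN1 N ltac:(lia)). specialize (HN2 N ltac:(lia)).
  replace (Csum n (fun j => (c N j - beta j) * RtoC y ^ j) - 0) with (Csum n (fun j => (c N j - beta j) * RtoC y ^ j)) in HN2 by ring.
  set (T := (L N - n)%nat).
  assert (EQ : Csum (L N) (fun j => c N j * RtoC y ^ j) =
     Csum n (fun j => c N j * RtoC y ^ j) + c N n * RtoC y ^ n +
     Csum T (fun i => c N (n + 1 + i)%nat * RtoC y ^ (n + 1 + i))).
  { rewrite (Csum_ext_zero (L N) (n + 1 + T)%nat (fun j => c N j * RtoC y ^ j)).
    rewrite Csum_split. replace (n + 1)%nat with (S n) by lia. simpl Csum at 1. f_equal.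
    unfold T; lia. intros i Hi. rewrite Hz by lia. ring. }
  assert (EQ2 : Csum (S n) (fun j => beta j * RtoC y ^ j) = Csum n (fun j => beta j * RtoC y ^ j) + beta n * RtoC y ^ n) by reflexivity.
  assert (EQ3 : Csum n (fun j => (c N j - beta j) * RtoC y ^ j) =
     Csum n (fun j => c N j * RtoC y ^ j) - Csum n (fun j => beta j * RtoC y ^ j)).
  { unfold Cminus. rewrite <- Csum_opp, <- Csum_plus. apply Csum_ext; intros; ring. }
  set (tail := Csum T (fun i => c N (n + 1 + i)%nat * RtoC y ^ (n + 1 + i))) in *.
  pose proof (tail_bound (c N) K1 y n T HK Hy0 HKy (Hb N)) as Htail. fold tail in Htail.
  assert (ID : (c N n - beta n) * RtoC y ^ n =
     (Csum (L N) (fun j => c N j * RtoC y ^ j) - g) + (g - Csum (S n) (fun j => beta j * RtoC y ^ j))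
     - Csum n (fun j => (c N j - beta j) * RtoC y ^ j) - tail).
  { rewrite EQ, EQ2, EQ3. ring. }
  assert (Hbig : (Cmod ((c N n - beta n) * RtoC y ^ n) < eps * y ^ n)%R).
  { rewrite ID.
    set (X1 := Csum (L N) (fun j => c N j * RtoC y ^ j) - g) in *.
    set (X2 := g - Csum (S n) (fun j => beta j * RtoC y ^ j)) in *.
    set (X3 := Csum n (fun j => (c N j - beta j) * RtoC y ^ j)) in *.
    assert (Cmod (X1 + X2 - X3 - tail) <= Cmod X1 + Cmod X2 + Cmod X3 + Cmod tail)%R.
    { unfold Cminus. eapply Rle_trans. apply Cmod_triangle. rewrite Cmod_opp.
      eapply Rle_trans. apply Rplus_le_compat_r. apply Cmod_triangle. rewrite Cmod_opp.
      pose proof (Cmod_triangle X1 X2). lra. }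
    assert (E1 : (C * y ^ S n + 2 * K1 ^ (n + 1) * y ^ (n + 1) = W * y * y ^ n)%R).
    { unfold W. replace (n + 1)%nat with (S n) by lia. simpl. ring. }
    assert (W * y * y ^ n <= eps / 2 * y ^ n)%R by (apply Rmult_le_compat_r; lra).
    lra. }
  rewrite Cmod_mult, Cmod_RtoC_pow in Hbig by lra.
  apply (Rmult_lt_reg_r (y ^ n)); auto. Qed.

Lemma Csum_mult_r n f c : Csum n f * c = Csum n (fun i => f i * c).
Proof. induction n; simpl. ring. rewrite <- IHn. ring. Qed.

Lemma Rsum_split p q f : Rsum (p + q) f = (Rsum p f + Rsum q (fun i => f (p + i)%nat))%R.
Proof. induction q. simpl. rewrite Nat.add_0_r. ring.
  rewrite Nat.add_succ_r. simpl. rewrite IHq. ring. Qed.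

Lemma conv_tri (al be : nat -> C) (x : C) M :
  Csum M (fun m => Csum (S m) (fun i => al i * be (m - i)%nat) * x ^ m) =
  Csum M (fun i => al i * x ^ i * Csum (M - i) (fun j => be j * x ^ j)).
Proof. induction M. reflexivity.
  change (Csum (S M) (fun m => Csum (S m) (fun i => al i * be (m - i)%nat) * x ^ m)) with
    (Csum M (fun m => Csum (S m) (fun i => al i * be (m - i)%nat) * x ^ m) +
     Csum (S M) (fun i => al i * be (M - i)%nat) * x ^ M).
  rewrite IHM.
  change (Csum (S M) (fun i => al i * x ^ i * Csum (S M - i) (fun j => be j * x ^ j))) with
    (Csum M (fun i => al i * x ^ i * Csum (S M - i) (fun j => be j * x ^ j)) +
     al M * x ^ M * Csum (S M - M) (fun j => be j * x ^ j)).
  replace (S M - M)%nat with 1%nat by lia.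
  rewrite (Csum_ext M (fun i => al i * x ^ i * Csum (S M - i) (fun j => be j * x ^ j))
     (fun i => al i * x ^ i * Csum (M - i) (fun j => be j * x ^ j) + al i * be (M - i)%nat * x ^ M)).
  2: { intros i Hi. replace (S M - i)%nat with (S (M - i)) by lia. simpl Csum at 1.
       replace (x ^ M) with (x ^ i * x ^ (M - i)) by (rewrite <- Cpow_add_r; f_equal; lia). ring. }
  rewrite Csum_plus. change (Csum (S M) (fun i => al i * be (M - i)%nat)) with
    (Csum M (fun i => al i * be (M - i)%nat) + al M * be (M - M)%nat).
  replace (M - M)%nat with 0%nat by lia. rewrite Cmult_plus_distr_r, Csum_mult_r. simpl Csum. ring. Qed.

Lemma pow_le_1 (r : R) b : (0 <= r <= 1)%R -> (r ^ b <= 1)%R.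
Proof. intros H. induction b; simpl. lra. assert (0 <= r ^ b)%R by (apply pow_le; lra). nra. Qed.

Lemma pow_le_1_shift (r : R) a b : (0 <= r <= 1)%R -> (r ^ (a + b) <= r ^ a)%R.
Proof. intros H. rewrite pow_add. assert (r ^ b <= 1)%R by (apply pow_le_1; lra).
  assert (0 <= r ^ a)%R by (apply pow_le; lra). nra. Qed.

Lemma conv_bound (al be : nat -> C) (x : C) M :
  (Cmod x <= 1)%R ->
  (Cmod (Csum M (fun i => al i * x ^ i) * Csum M (fun j => be j * x ^ j)
         - Csum M (fun m => Csum (S m) (fun i => al i * be (m - i)%nat) * x ^ m))%C
   <= Rsum M (fun i => Cmod (al i)) * Rsum M (fun i => Cmod (be i)) * Cmod x ^ M)%R.
Proof. intros Hx. pose proof (Cmod_ge_0 x) as Hx0. rewrite conv_tri. rewrite Csum_mult_r.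
  unfold Cminus. rewrite <- Csum_opp, <- Csum_plus.
  set (Bb := Rsum M (fun i => Cmod (be i))).
  assert (HBb : (0 <= Bb)%R) by (apply Rsum_nonneg; intros; apply Cmod_ge_0).
  eapply Rle_trans. apply Cmod_Csum.
  eapply Rle_trans. apply (Rsum_le M _ (fun i => (Cmod (al i) * Bb * Cmod x ^ M)%R)).
  2: { rewrite (Rsum_ext M _ (fun i => (Bb * Cmod x ^ M) * Cmod (al i))%R) by (intros; ring).
       rewrite Rsum_scal. lra. }
  intros i Hi.
  replace (al i * x ^ i * Csum M (fun j => be j * x ^ j) + - (al i * x ^ i * Csum (M - i) (fun j => be j * x ^ j)))
    with (al i * x ^ i * (Csum M (fun j => be j * x ^ j) - Csum (M - i) (fun j => be j * x ^ j))) by ring.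
  replace M with ((M - i) + i)%nat at 1 by lia. rewrite Csum_split.
  replace (Csum (M - i) (fun j => be j * x ^ j) + Csum i (fun i0 => be (M - i + i0)%nat * x ^ (M - i + i0)) -
      Csum (M - i) (fun j => be j * x ^ j)) with (Csum i (fun i0 => be (M - i + i0)%nat * x ^ (M - i + i0))) by ring.
  rewrite !Cmod_mult, Cmod_pow.
  assert (Hs : (Cmod (Csum i (fun i0 => (be (M - i + i0)%nat * x ^ (M - i + i0))%C)) <= Cmod x ^ (M - i) * Bb)%R).
  { eapply Rle_trans. apply Cmod_Csum.
    eapply Rle_trans. apply (Rsum_le i _ (fun l => (Cmod x ^ (M - i) * Cmod (be (M - i + l)%nat))%R)).
    { intros l _. rewrite Cmod_mult, Cmod_pow. rewrite Rmult_comm. apply Rmult_le_compat_r. apply Cmod_ge_0.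
      apply pow_le_1_shift; lra. }
    rewrite Rsum_scal. apply Rmult_le_compat_l. apply pow_le; lra.
    unfold Bb. replace (Rsum M (fun i0 => Cmod (be i0))) with (Rsum ((M - i) + i) (fun i0 => Cmod (be i0))) by (f_equal; lia).
    rewrite Rsum_split.
    assert (0 <= Rsum (M - i) (fun i0 => Cmod (be i0)))%R by (apply Rsum_nonneg; intros; apply Cmod_ge_0). lra. }
  assert (E : (Cmod x ^ M = Cmod x ^ i * Cmod x ^ (M - i))%R) by (rewrite <- pow_add; f_equal; lia).
  rewrite E. pose proof (Cmod_ge_0 (al i)). assert (0 <= Cmod x ^ i)%R by (apply pow_le; lra).
  assert (0 <= Cmod (al i) * Cmod x ^ i)%R by (apply Rmult_le_pos; lra).
  apply (Rmult_le_compat_l (Cmod (al i) * Cmod x ^ i)) in Hs; auto.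
  replace (Cmod (al i) * Bb * (Cmod x ^ i * Cmod x ^ (M - i)))%R with (Cmod (al i) * Cmod x ^ i * (Cmod x ^ (M - i) * Bb))%R by ring.
  auto. Qed.

Lemma hyp_Csum a c z N : hyp1F1_partial a c z N = Csum N (fun p => Ac a c p * z ^ p).
Proof. unfold hyp1F1_partial. apply Csum_ext. intros. unfold Ac, Cdiv. ring. Qed.

Lemma Ac_geom a c v : is_hyp1F1 a c 2 v ->
  exists K, (0 <= K)%R /\ forall p, (Cmod (Ac a c p) <= K * (1/2) ^ p)%R.
Proof. intros H. destruct (Ccv_bounded _ _ H) as [B [HB0 HB]].
  exists (2 * B)%R. split. lra. intros p.
  assert (E : Ac a c p * 2 ^ p = hyp1F1_partial a c 2 (S p) - hyp1F1_partial a c 2 p).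
  { rewrite !hyp_Csum. simpl. ring. }
  assert (Cmod (Ac a c p * 2 ^ p) <= 2 * B)%R.
  { rewrite E. unfold Cminus. eapply Rle_trans. apply Cmod_triangle. rewrite Cmod_opp.
    pose proof (HB (S p)). pose proof (HB p). lra. }
  rewrite Cmod_mult, Cmod_pow, Cmod_R, Rabs_pos_eq in H0 by lra.
  assert (E2 : ((1/2) ^ p * 2 ^ p = 1)%R) by (rewrite <- Rpow_mult_distr; replace (1/2*2)%R with 1%R by field; apply pow1).
  assert (0 < 2 ^ p)%R by (apply pow_lt; lra).
  assert (0 < (1/2) ^ p)%R by (apply pow_lt; lra).
  replace (Cmod (Ac a c p)) with (Cmod (Ac a c p) * 2 ^ p * (1/2) ^ p)%R by (rewrite Rmult_assoc, (Rmult_comm (2^p)), E2; ring).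
  apply Rmult_le_compat_r; lra. Qed.

Lemma geom_sum_bound (K r : R) (M : nat) (f : nat -> C) :
  (0 <= K)%R -> (0 <= r <= 1)%R -> (forall p, Cmod (f p) <= K * (1/2) ^ p)%R ->
  forall T, (Rsum T (fun l => Cmod (f (M + l)%nat) * r ^ (M + l)) <= 2 * K * r ^ M)%R.
Proof. intros HK Hr Hf T.
  eapply Rle_trans. apply (Rsum_le T _ (fun l => (K * r ^ M * (1/2) ^ l)%R)).
  { intros l _. specialize (Hf (M + l)%nat).
    rewrite !pow_add in *. assert (0 <= r ^ M)%R by (apply pow_le; lra).
    assert (0 <= r ^ l <= 1)%R by (split; [apply pow_le; lra | apply pow_le_1; lra]).
    assert (0 <= (1/2) ^ M)%R by (apply pow_le; lra). assert (0 <= (1/2) ^ l)%R by (apply pow_le; lra).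
    assert ((1/2) ^ M <= 1)%R by (apply pow_le_1; lra).
    pose proof (Cmod_ge_0 (f (M + l)%nat)).
    assert (K * ((1 / 2) ^ M * (1 / 2) ^ l) <= K * (1/2) ^ l)%R.
    { apply Rmult_le_compat_l; auto. nra. }
    assert (0 <= K * ((1 / 2) ^ M * (1 / 2) ^ l))%R by (apply Rmult_le_pos; auto; nra).
    assert (r ^ M * r ^ l <= r ^ M)%R by nra.
    assert (0 <= r ^ M * r ^ l)%R by nra.
    apply Rle_trans with (K * ((1 / 2) ^ M * (1 / 2) ^ l) * (r ^ M * r ^ l))%R.
    { apply Rmult_le_compat_r; auto. }
    apply Rle_trans with (K * (1/2) ^ l * r ^ M)%R.
    { apply Rmult_le_compat; auto. }
    right; ring. }
  rewrite Rsum_scal. pose proof (Rsum_geom T (1/2) ltac:(lra)).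
  assert (0 <= K * r ^ M)%R by (apply Rmult_le_pos; auto; apply pow_le; lra).
  replace (2 * K * r ^ M)%R with (K * r ^ M * 2)%R by ring. apply Rmult_le_compat_l; auto. Qed.

Lemma Phi_tail a c z v K M : (0 <= K)%R -> (forall p, Cmod (Ac a c p) <= K * (1/2) ^ p)%R ->
  (Cmod z <= 1)%R -> is_hyp1F1 a c z v ->
  (Cmod (v - Csum M (fun p => Ac a c p * z ^ p))%C <= 2 * K * Cmod z ^ M)%R.
Proof. intros HK HA Hz Hv. apply (Ccv_le _ _ _ _ M Hv). intros N HN. rewrite hyp_Csum.
  replace N with (M + (N - M))%nat by lia. rewrite Csum_split.
  replace (Csum M (fun p => Ac a c p * z ^ p) + Csum (N - M) (fun i => Ac a c (M + i)%nat * z ^ (M + i)) -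
     Csum M (fun p => Ac a c p * z ^ p)) with (Csum (N - M) (fun i => Ac a c (M + i)%nat * z ^ (M + i))) by ring.
  eapply Rle_trans. apply Cmod_Csum.
  eapply Rle_trans. 2: apply (geom_sum_bound K (Cmod z) M (Ac a c) HK (conj (Cmod_ge_0 z) Hz) HA (N - M)).
  apply Rsum_le. intros l _. rewrite Cmod_mult, Cmod_pow. lra. Qed.

Lemma T_bound a c z K M : (0 <= K)%R -> (forall p, Cmod (Ac a c p) <= K * (1/2) ^ p)%R ->
  (Cmod z <= 1)%R -> (Rsum M (fun p => Cmod (Ac a c p) * Cmod z ^ p) <= 2 * K)%R.
Proof. intros HK HA Hz. pose proof (geom_sum_bound K (Cmod z) 0 (Ac a c) HK (conj (Cmod_ge_0 z) Hz) HA M).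
  simpl in H. lra. Qed.

Lemma Rsum_Ac_bound a c K M : (0 <= K)%R -> (forall p, Cmod (Ac a c p) <= K * (1/2) ^ p)%R ->
  (Rsum M (fun p => Cmod (Ac a c p)) <= 2 * K)%R.
Proof. intros HK HA. pose proof (T_bound a c 1 K M HK HA). rewrite Cmod_1 in H.
  rewrite (Rsum_ext M _ (fun p => Cmod (Ac a c p) * 1 ^ p)%R). apply H; lra.
  intros; rewrite pow1; ring. Qed.

Lemma Cmod_neg1_pow n : Cmod ((-1) ^ n) = 1%R.
Proof. rewrite Cmod_pow. replace (Cmod (-1)) with 1%R. apply pow1.
  symmetry. first [rewrite Cmod_opp, Cmod_1; reflexivity | rewrite Cmod_R, Rabs_left; lra | rewrite Cmod_m1; reflexivity]. Qed.

Lemma Csum_pairs D (h : nat -> C) : Csum (2 * D) h = Csum D (fun n => h (2 * n)%nat + h (2 * n + 1)%nat).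
Proof. induction D. reflexivity. replace (2 * S D)%nat with (S (S (2 * D))) by lia.
  change (Csum (S (S (2 * D))) h) with (Csum (2 * D) h + h (2 * D)%nat + h (S (2 * D))).
  rewrite IHD. change (Csum (S D) (fun n => h (2 * n)%nat + h (2 * n + 1)%nat)) with
    (Csum D (fun n => h (2 * n)%nat + h (2 * n + 1)%nat) + (h (2 * D)%nat + h (2 * D + 1)%nat)).
  replace (S (2 * D)) with (2 * D + 1)%nat by lia. ring. Qed.

Lemma Cpow_2n (z : C) n : z ^ (2 * n) = (z * z) ^ n.
Proof. induction n. reflexivity. replace (2 * S n)%nat with (S (S (2 * n))) by lia.
  rewrite !Cpow_S, IHn. ring. Qed.

Lemma Cmod_T_le (f : nat -> C) (z : C) M K :
  (Rsum M (fun p => Cmod (f p) * Cmod z ^ p) <= K)%R -> (Cmod (Csum M (fun p => (f p * z ^ p)%C)) <= K)%R.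
Proof. intros H. eapply Rle_trans. apply Cmod_Csum. eapply Rle_trans. 2: exact H.
  apply Rsum_le. intros. rewrite Cmod_mult, Cmod_pow. lra. Qed.

Lemma g_exp a b K D x v1 v2 : (forall k, a + b + RtoC (INR k) <> 0) ->
  (0 <= K)%R -> (forall p, Cmod (Ac a (a + b) p) <= K * (1/2) ^ p)%R ->
  (0 < x <= 1)%R -> is_hyp1F1 a (a + b) (RtoC x) v1 -> is_hyp1F1 a (a + b) (- RtoC x) v2 ->
  (Cmod (v1 * v2 - Csum D (fun n => Bn a b n * RtoC (x * x) ^ n))%C <= 16 * K ^ 2 * (x * x) ^ D)%R.
Proof. intros Hc HK HA Hx H1 H2. set (c := a + b) in *. set (M := (2 * D)%nat). set (z := RtoC x).
  assert (Hz : Cmod z = x) by (unfold z; rewrite Cmod_R, Rabs_pos_eq; lra).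
  assert (Hz' : Cmod (- z) = x) by (rewrite Cmod_opp; auto).
  set (T1 := Csum M (fun p => Ac a c p * z ^ p)).
  set (T2 := Csum M (fun p => Ac a c p * (- z) ^ p)).
  set (S := Csum M (fun m => Csum (S m) (fun i => Ac a c i * (Ac a c (m - i)%nat * (-1) ^ (m - i))) * z ^ m)).
  assert (R1 : (Cmod (v1 - T1)%C <= 2 * K * x ^ M)%R) by (rewrite <- Hz; apply Phi_tail; auto; lra).
  assert (R2 : (Cmod (v2 - T2)%C <= 2 * K * x ^ M)%R) by (rewrite <- Hz'; apply Phi_tail; auto; lra).
  assert (B1 : (Cmod T1 <= 2 * K)%R) by (apply Cmod_T_le; apply T_bound; auto; lra).
  assert (B2 : (Cmod T2 <= 2 * K)%R) by (apply Cmod_T_le; apply T_bound; auto; lra).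
  assert (E2 : T2 = Csum M (fun j => (Ac a c j * (-1) ^ j) * z ^ j)).
  { unfold T2. apply Csum_ext. intros. replace (- z) with ((-1) * z) by ring. rewrite Cpow_mult_l. ring. }
  assert (B3 : (Cmod (T1 * T2 - S)%C <= 2 * K * (2 * K) * x ^ M)%R).
  { rewrite E2. unfold T1, S. rewrite <- Hz.
    eapply Rle_trans. apply (conv_bound (Ac a c) (fun j => Ac a c j * (-1) ^ j) z M). lra.
    assert (Q1 : (Rsum M (fun i => Cmod (Ac a c i)) <= 2 * K)%R) by (apply Rsum_Ac_bound; auto).
    assert (Q2 : (Rsum M (fun i => Cmod (Ac a c i * (-1) ^ i)%C) <= 2 * K)%R).
    { rewrite (Rsum_ext M _ (fun i => Cmod (Ac a c i))). auto. intros. rewrite Cmod_mult, Cmod_neg1_pow. ring. }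
    assert (0 <= Rsum M (fun i => Cmod (Ac a c i)))%R by (apply Rsum_nonneg; intros; apply Cmod_ge_0).
    assert (0 <= Rsum M (fun i => Cmod (Ac a c i * (-1) ^ i)%C))%R by (apply Rsum_nonneg; intros; apply Cmod_ge_0).
    assert (0 <= Cmod z ^ M)%R by (apply pow_le; apply Cmod_ge_0).
    apply Rmult_le_compat_r; auto. apply Rmult_le_compat; auto. }
  assert (ES : S = Csum D (fun n => Bn a b n * RtoC (x * x) ^ n)).
  { unfold S. fold c. change (Csum M (fun m => gam a c m * z ^ m) = Csum D (fun n => Bn a b n * RtoC (x * x) ^ n)).
    unfold M. rewrite Csum_pairs. apply Csum_ext. intros n _.
    rewrite !gam_um. unfold c. rewrite um_odd, um_even by auto. rewrite Cpow_2n. unfold z. rewrite RtoC_mult. ring. }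
  rewrite <- ES.
  assert (Hx0 : (0 <= x ^ M)%R) by (apply pow_le; lra).
  assert (HxM : (x ^ M <= 1)%R) by (apply pow_le_1; lra).
  assert (Bv2 : (Cmod v2 <= 4 * K)%R).
  { pose proof (Cmod_tri3 v2 T2 0). replace (v2 - 0) with v2 in H by ring. replace (T2 - 0) with T2 in H by ring.
    assert (2 * K * x ^ M <= 2 * K)%R by nra. lra. }
  replace (v1 * v2 - S) with ((v1 - T1) * v2 + T1 * (v2 - T2) + (T1 * T2 - S)) by ring.
  eapply Rle_trans. apply Cmod_triangle. eapply Rle_trans. apply Rplus_le_compat_r. apply Cmod_triangle.
  rewrite !Cmod_mult.
  assert (Cmod (v1 - T1)%C * Cmod v2 <= 2 * K * x ^ M * (4 * K))%R by (apply Rmult_le_compat; auto; apply Cmod_ge_0).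
  assert (Cmod T1 * Cmod (v2 - T2)%C <= 2 * K * (2 * K * x ^ M))%R by (apply Rmult_le_compat; auto; apply Cmod_ge_0).
  replace ((x * x) ^ D)%R with (x ^ M)%R by (unfold M; rewrite pow_mult; f_equal; simpl; ring).
  nra. Qed.

Lemma esym_zero x N n : (N < n)%nat -> esym x n N = 0.
Proof. revert n. induction N; intros n H; destruct n; try lia. reflexivity.
  change (esym x (S n) (S N)) with (esym x (S n) N + x N * esym x n N).
  rewrite !IHN by lia. ring. Qed.

Lemma esym_0 x N : esym x 0 N = 1.
Proof. destruct N; reflexivity. Qed.

Lemma esym_prod x t N : Cprod N (fun k => 1 + t * x k) = Csum (S N) (fun n => esym x n N * t ^ n).
Proof. induction N.
  - simpl. ring.
  - change (Cprod (S N) (fun k => 1 + t * x k)) with (Cprod N (fun k => 1 + t * x k) * (1 + t * x N)).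
    rewrite IHN. rewrite (Csum_shift (S N)). rewrite esym_0.
    rewrite (Csum_ext (S N) (fun i => esym x (S i) (S N) * t ^ S i)
      (fun i => esym x (S i) N * t ^ S i + t * x N * (esym x i N * t ^ i))).
    2: { intros i _. change (esym x (S i) (S N)) with (esym x (S i) N + x N * esym x i N). rewrite Cpow_S. ring. }
    rewrite Csum_plus, Csum_scal.
    change (Csum (S N) (fun i => esym x (S i) N * t ^ S i)) with
      (Csum N (fun i => esym x (S i) N * t ^ S i) + esym x (S N) N * t ^ S N).
    rewrite esym_zero by lia.
    rewrite (Csum_shift N (fun n => esym x n N * t ^ n)). rewrite esym_0. simpl Cpow at 1. ring. Qed.

Lemma esym_bound x N n : (Cmod (esym x n N) <= (Rsum N (fun k => Cmod (x k))) ^ n)%R.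
Proof. revert n. induction N; intros n.
  - destruct n; simpl. rewrite Cmod_1. lra. rewrite Cmod_0. lra.
  - destruct n. rewrite esym_0, Cmod_1. simpl; lra.
    change (esym x (S n) (S N)) with (esym x (S n) N + x N * esym x n N).
    change (Rsum (S N) (fun k => Cmod (x k))) with (Rsum N (fun k => Cmod (x k)) + Cmod (x N))%R.
    set (s := Rsum N (fun k => Cmod (x k))). pose proof (Cmod_ge_0 (x N)).
    assert (Hs : (0 <= s)%R) by (apply Rsum_nonneg; intros; apply Cmod_ge_0).
    eapply Rle_trans. apply Cmod_triangle. rewrite Cmod_mult.
    pose proof (IHN (S n)). pose proof (IHN n).
    assert (Cmod (x N) * Cmod (esym x n N) <= Cmod (x N) * s ^ n)%R by (apply Rmult_le_compat_l; auto).
    assert (s ^ n <= (s + Cmod (x N)) ^ n)%R by (apply pow_incr; lra).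
    change ((s + Cmod (x N)) ^ S n)%R with ((s + Cmod (x N)) * (s + Cmod (x N)) ^ n)%R.
    change (s ^ S n)%R with (s * s ^ n)%R in H0. assert (0 <= s ^ n)%R by (apply pow_le; lra).
    assert ((s + Cmod (x N)) * s ^ n <= (s + Cmod (x N)) * (s + Cmod (x N)) ^ n)%R by (apply Rmult_le_compat_l; lra).
    apply Rle_trans with ((s + Cmod (x N)) * s ^ n)%R; auto.
    replace ((s + Cmod (x N)) * s ^ n)%R with (s * s ^ n + Cmod (x N) * s ^ n)%R by ring.
    apply Rplus_le_compat; auto. Qed.

Lemma Cprod_mult N f g : Cprod N f * Cprod N g = Cprod N (fun k => f k * g k).
Proof. induction N; simpl. ring. rewrite <- IHN. ring. Qed.

Lemma Cexp_neg u : Cexp u * Cexp (- u) = 1.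
Proof. unfold Cexp. destruct u as [r i]. simpl.
  rewrite cos_neg, sin_neg.
  assert (E : (exp r * exp (- r) = 1)%R) by (rewrite <- exp_plus; replace (r + - r)%R with 0%R by ring; apply exp_0).
  apply injective_projections; simpl.
  - replace (exp r * cos i * (exp (- r) * cos i) - exp r * sin i * (exp (- r) * - sin i))%R
      with ((exp r * exp (- r)) * (Rsqr (sin i) + Rsqr (cos i)))%R by (unfold Rsqr; ring).
    rewrite E, sin2_cos2. ring.
  - ring. Qed.

Lemma Csum_RtoC N r : Csum N (fun k => RtoC (r k)) = RtoC (Rsum N r).
Proof. induction N; simpl. auto. rewrite IHN, RtoC_plus. auto. Qed.

Lemma Cprod_ext n f g : (forall i, (i < n)%nat -> f i = g i) -> Cprod n f = Cprod n g.
Proof. induction n; simpl; intros H; auto. rewrite IHn by (intros; apply H; lia). rewrite H by lia; auto. Qed.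

Theorem mainTheorem1 :
  forall (a b : C),
    (forall m : nat, a + b <> RtoC (- INR m)) ->
    forall w : nat -> C,
      weierstrass_zeros a b w ->
      (forall n : nat,
         is_zeta2 w n
           ((- 1) ^ n / RtoC (INR (fact n)) *
            (poch a n * poch b n / (poch (a + b) n * poch (a + b) (2 * n)%nat)))) /\
      is_zeta2 w 1 (- (a * b) / ((a + b) ^ 2 * (a + b + 1))) /\
      is_zeta2 w 2 (a * (1 + a) * b * (1 + b) /
                    (2 * (a + b) ^ 2 * (1 + a + b) ^ 2 * (2 + a + b) * (3 + a + b))).
Proof.
  intros a b Hab w [HS Hprod].
  assert (Hc : forall k, a + b + RtoC (INR k) <> 0).
  { intros k E. apply (Hab k). rewrite RtoC_opp.
    replace (a + b) with ((a + b + RtoC (INR k)) - RtoC (INR k)) by ring. rewrite E. ring. }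
  set (x := fun k => w k ^ 2).
  destruct (Hprod 2) as [v2 [Hv2 _]]. destruct (Ac_geom a (a + b) v2 Hv2) as [K [HK HA]].
  destruct HS as [S0 HS0]. destruct (Ccv_bounded _ _ HS0) as [B [HB0 HB]].
  set (K1 := (B + 1)%R).
  assert (Hsig : forall N, (0 <= Rsum N (fun k => Cmod (x k)) <= B)%R).
  { intros N. specialize (HB N).
    rewrite (Csum_RtoC N (fun k => (Cmod (w k) ^ 2)%R)) in HB. rewrite Cmod_R in HB.
    rewrite (Rsum_ext N _ (fun k => (Cmod (w k) ^ 2)%R)).
    2: { intros; unfold x; rewrite Cmod_pow; auto. }
    assert (0 <= Rsum N (fun k => (Cmod (w k) ^ 2)%R))%R by (apply Rsum_nonneg; intros; apply pow_le; apply Cmod_ge_0).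
    rewrite Rabs_pos_eq in HB; auto. }
  assert (Hmain : forall n, Ccv (fun N => esym x n N * (-1) ^ n) (Bn a b n)).
  { apply (coeff_extract (fun N n => esym x n N * (-1) ^ n) S (Bn a b) K1).
    - unfold K1; lra.
    - intros N n. rewrite Cmod_mult, Cmod_neg1_pow, Rmult_1_r.
      eapply Rle_trans. apply esym_bound. apply pow_incr. specialize (Hsig N). unfold K1; lra.
    - intros N n Hn. rewrite esym_zero by lia. ring.
    - intros D. exists (16 * K ^ 2)%R. split. nra. intros y Hy.
      set (s := sqrt y).
      assert (Hs : (0 < s <= 1)%R).
      { split. apply sqrt_lt_R0; lra. rewrite <- sqrt_1. apply sqrt_le_1_alt. lra. }
      assert (Hss : (s * s = y)%R) by (apply sqrt_sqrt; lra).
      destruct (Hprod (RtoC s)) as [v1 [H1 P1]]. destruct (Hprod (- RtoC s)) as [v3 [H3 P3]].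
      exists (v1 * v3). split.
      + apply (Ccv_ext _ _ _ ltac:(intros N; reflexivity)) in P1.
        eapply Ccv_ext. 2: exact (Ccv_mult _ _ _ _ P1 P3).
        intros N. cbv beta.
        set (al := a / (a + b)).
        transitivity ((Cexp (al * RtoC s) * Cexp (- (al * RtoC s))) *
           (Cprod N (fun k => (1 - RtoC s * w k) * Cexp (RtoC s * w k)) *
            Cprod N (fun k => (1 - - RtoC s * w k) * Cexp (- RtoC s * w k)))).
        { replace (al * - RtoC s) with (- (al * RtoC s)) by ring. ring. }
        rewrite Cexp_neg, Cprod_mult.
        rewrite (Cprod_ext N _ (fun k => 1 + (- RtoC y) * x k)).
        2: { intros k _. replace (- RtoC s * w k) with (- (RtoC s * w k)) by ring.
             transitivity ((1 - RtoC s * w k) * (1 + RtoC s * w k) * (Cexp (RtoC s * w k) * Cexp (- (RtoC s * w k)))).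
             ring. rewrite Cexp_neg. unfold x. rewrite <- Hss, RtoC_mult. simpl. ring. }
        rewrite esym_prod. rewrite Cmult_1_l. apply Csum_ext. intros n _.
        replace (- RtoC y) with ((-1) * RtoC y) by ring. rewrite Cpow_mult_l. ring.
      + pose proof (g_exp a b K D s v1 v3 Hc HK HA Hs H1 H3). rewrite Hss in H. exact H. }
  assert (Hgen : forall n, is_zeta2 w n
           ((- 1) ^ n / RtoC (INR (fact n)) *
            (poch a n * poch b n / (poch (a + b) n * poch (a + b) (2 * n)%nat)))).
  { intros n. unfold is_zeta2. fold x.
    replace ((- 1) ^ n / RtoC (INR (fact n)) * (poch a n * poch b n / (poch (a + b) n * poch (a + b) (2 * n)%nat)))
      with (Bn a b n * (-1) ^ n).
    2: { unfold Bn. pose proof (fact_C_neq n). pose proof (poch_neq _ n Hc). pose proof (poch_neq _ (2 * n) Hc).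
         field. repeat split; auto. }
    eapply Ccv_ext. 2: exact (Ccv_mult _ _ _ _ (Hmain n) (Ccv_const ((-1) ^ n))).
    intros N. simpl. rewrite <- Cmult_assoc, neg1_sq. ring. }
  assert (c0 : a + b <> 0) by (replace (a + b) with (a + b + RtoC (INR 0)) by (simpl; ring); apply Hc).
  assert (c1 : a + b + 1 <> 0) by (replace (a + b + 1) with (a + b + RtoC (INR 1)) by (simpl; ring); apply Hc).
  assert (c2 : a + b + 2 <> 0) by (replace (a + b + 2) with (a + b + RtoC (INR 2)) by (simpl; rewrite RtoC_plus; ring); apply Hc).
  assert (c3 : a + b + 3 <> 0) by (replace (a + b + 3) with (a + b + RtoC (INR 3)) by (simpl; rewrite !RtoC_plus; ring); apply Hc).
  split; [exact Hgen | split].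
  - pose proof (Hgen 1%nat) as G. eapply Ccv_ext. intros; reflexivity.
    replace (- (a * b) / ((a + b) ^ 2 * (a + b + 1))) with
      ((- 1) ^ 1 / RtoC (INR (fact 1)) * (poch a 1 * poch b 1 / (poch (a + b) 1 * poch (a + b) (2 * 1)%nat))).
    exact G. simpl. rewrite ?RtoC_plus. field. repeat split; auto.
  - pose proof (Hgen 2%nat) as G. eapply Ccv_ext. intros; reflexivity.
    replace (a * (1 + a) * b * (1 + b) / (2 * (a + b) ^ 2 * (1 + a + b) ^ 2 * (2 + a + b) * (3 + a + b))) with
      ((- 1) ^ 2 / RtoC (INR (fact 2)) * (poch a 2 * poch b 2 / (poch (a + b) 2 * poch (a + b) (2 * 2)%nat))).
    exact G. simpl. rewrite ?RtoC_plus. field.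
    cbv beta. repeat split; auto.
    + replace (RtoC (IZR 3) + a + b) with (a + b + 3) by ring. auto.
    + replace (RtoC (IZR 2) + a + b) with (a + b + 2) by ring. auto.
    + replace (RtoC (IZR 1) + a + b) with (a + b + 1) by ring. auto.
Qed.
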